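(* Let $(A,\leq,\cdot,/)$ be a narhoop and let $N$ be a nonempty normal subnarhoop of $A$. Define a relation $\preceq_N$ on $A$ by $x\preceq_N y$ iff $y/x\in N$. Then: (1) for all $x,y,z\in A$, $x\preceq_N y$ implies $xz\preceq_N yz$; (2) for all $x,y,z\in A$, $x\preceq_N y$ implies $x/z\preceq_N y/z$; (3) $\preceq_N$ is a preorder (reflexive and transitive); in particular $y/y\in N$ for all $y\in A$.
   Context: Write $xy$ for $x\cdot y$; $\cdot$ binds more strongly than $/$, and $/$ binds more strongly than $\sqcap$, where $x\sqcap y := (x/y)y$. A right-residuated magma is a structure $(A,\leq,\cdot,/)$ where $(A,\leq)$ is a poset and $xy\leq z\iff x\leq z/y$ for all $x,y,z\in A$. A narhoop is a right-residuated magma such that for all $x,y$: $x\leq y\iff x\sqcap y = x = y\sqcap x$. For $x,y\in A$ define maps $A\to A$ by $\phi_{1,x,y}(z)=((zx)y)/(xy)$, $\phi_{2,x,y}(z)=((zx)/y)/(x/y)$, $\phi_{3,x,y}(z)=(x(zy))/(xy)$, $\phi_{4,x,y}(z)=(x/(zy))/(x/y)$, $\phi_{5,x,y}(z)=(xy)/(x(zy))$, $\phi_{6,x,y}(z)=(x/y)/(x/(zy))$; $\mathrm{Inn}(A)$ is the semigroup of maps generated by all of these under composition. A nonempty subset $N\subseteq A$ is a normal subnarhoop if (i) $N$ is closed under $\cdot$ and $/$; (ii) whenever $x\leq y$ and $x\in N$, then $y\in N$; (iii) $\phi(N)\subseteq N$ for all $\phi\in\mathrm{Inn}(A)$. *)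

(* Defs.v *)
Set Implicit Arguments.

Record RRMagma := {
  car :> Type;
  le : car -> car -> Prop;
  mul : car -> car -> car;
  rdiv : car -> car -> car;
  le_refl : forall x, le x x;
  le_trans : forall x y z, le x y -> le y z -> le x z;
  le_antisym : forall x y, le x y -> le y x -> x = y;
  residuation : forall x y z, le (mul x y) z <-> le x (rdiv z y)
}.

Arguments le : clear implicits.
Definition sqcap (A : RRMagma) (x y : A) : A := mul A (rdiv A x y) y.
Arguments sqcap : clear implicits.

Definition is_narhoop (A : RRMagma) : Prop :=
  forall x y : A, le A x y <-> (sqcap A x y = x /\ sqcap A y x = x).

Section Inner.
Variable A : RRMagma.
Local Notation "x * y" := (mul A x y).
Local Notation "x / y" := (rdiv A x y).

Definition phi1 (x y : A) : A -> A := fun z => ((z * x) * y) / (x * y).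
Definition phi2 (x y : A) : A -> A := fun z => ((z * x) / y) / (x / y).
Definition phi3 (x y : A) : A -> A := fun z => (x * (z * y)) / (x * y).
Definition phi4 (x y : A) : A -> A := fun z => (x / (z * y)) / (x / y).
Definition phi5 (x y : A) : A -> A := fun z => (x * y) / (x * (z * y)).
Definition phi6 (x y : A) : A -> A := fun z => (x / y) / (x / (z * y)).

Inductive Inn : (A -> A) -> Prop :=
| Inn1 x y : Inn (phi1 x y)
| Inn2 x y : Inn (phi2 x y)
| Inn3 x y : Inn (phi3 x y)
| Inn4 x y : Inn (phi4 x y)
| Inn5 x y : Inn (phi5 x y)
| Inn6 x y : Inn (phi6 x y)
| Inn_comp f g : Inn f -> Inn g -> Inn (fun z => f (g z)).

Definition normal_subnarhoop (N : A -> Prop) : Prop :=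
  (exists n, N n) /\
  (forall x y, N x -> N y -> N (x * y)) /\
  (forall x y, N x -> N y -> N (x / y)) /\
  (forall x y, le A x y -> N x -> N y) /\
  (forall f, Inn f -> forall z, N z -> N (f z)).

Definition precN (N : A -> Prop) (x y : A) : Prop := N (y / x).
End Inner.
Arguments normal_subnarhoop {A} N.
Arguments precN {A} N x y.
Arguments Inn {A} _.

(* Main.v *)
Require Import Defs.

Section L.
Variable A : RRMagma.
Local Notation "x * y" := (mul A x y).
Local Notation "x / y" := (rdiv A x y).

Lemma le_divmul (a b : A) : le A ((a / b) * b) a.
Proof. apply (proj2 (residuation A _ _ _)); apply le_refl. Qed.

Lemma le_muldiv (a b : A) : le A a ((a * b) / b).
Proof. apply (proj1 (residuation A _ _ _)); apply le_refl. Qed.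

Lemma mono_mul (x x' y : A) : le A x x' -> le A (x * y) (x' * y).
Proof.
  intro H. apply (proj2 (residuation A _ _ _)).
  eapply le_trans; [exact H| apply le_muldiv].
Qed.

Lemma mono_div (a a' b : A) : le A a a' -> le A (a / b) (a' / b).
Proof.
  intro H. apply (proj1 (residuation A _ _ _)).
  eapply le_trans; [apply le_divmul| exact H].
Qed.
End L.

Theorem mainTheorem13 (A : RRMagma) (N : A -> Prop) :
  is_narhoop A -> normal_subnarhoop N ->
  (forall x y z : A, precN N x y -> precN N (mul A x z) (mul A y z)) /\
  (forall x y z : A, precN N x y -> precN N (rdiv A x z) (rdiv A y z)) /\
  ((forall x : A, precN N x x) /\
   (forall x y z : A, precN N x y -> precN N y z -> precN N x z)) /\
  (forall y : A, N (rdiv A y y)).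
Proof.
  intros Hn [[n Hn0] [Hmul [Hdiv [Hup Hinn]]]].
  unfold precN.
  assert (Hsq : forall x y : A, le A x y -> mul A (rdiv A x y) y = x)
    by (intros x y H; exact (proj1 (proj1 (Hn x y) H))).
  assert (Hself : forall x : A, mul A (rdiv A x x) x = x)
    by (intro x; apply Hsq, le_refl).
  assert (P1 : forall x y z : A, N (rdiv A y x) -> N (rdiv A (mul A y z) (mul A x z))).
  { intros x y z H. apply Hup with (x := phi1 A x z (rdiv A y x)).
    - unfold phi1. apply mono_div, mono_mul, le_divmul.
    - apply Hinn; [constructor|exact H]. }
  assert (P2 : forall x y z : A, N (rdiv A y x) -> N (rdiv A (rdiv A y z) (rdiv A x z))).
  { intros x y z H. apply Hup with (x := phi2 A x z (rdiv A y x)).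
    - unfold phi2. apply mono_div, mono_div, le_divmul.
    - apply Hinn; [constructor|exact H]. }
  assert (Refl : forall y : A, N (rdiv A y y)).
  { intro y. set (e := rdiv A n n).
    assert (He : N e) by (apply Hdiv; assumption).
    set (g := rdiv A (mul A y n) n).
    assert (Hg : N (rdiv A g g)).
    { pose proof (Hinn _ (Inn4 A (mul A y n) n) e He) as H. unfold phi4 in H.
      unfold e in H. rewrite Hself in H. exact H. }
    assert (Hyg : le A y g) by apply le_muldiv.
    pose proof (Hinn _ (Inn3 A (rdiv A y g) g) _ Hg) as H. unfold phi3 in H.
    rewrite Hself, (Hsq _ _ Hyg) in H. exact H. }
  split; [exact P1|]. split; [exact P2|]. split; [|exact Refl].
  split; [exact Refl|].
  intros x y z Hxy Hyz.
  pose proof (P2 y z x Hyz) as H.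
  apply Hup with (x := mul A (rdiv A (rdiv A z x) (rdiv A y x)) (rdiv A y x)).
  - apply le_divmul.
  - apply Hmul; assumption.
Qed.
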